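(* Assume X uses a memory-one strategy $\mathbf p$ that is generous and of Nash type. Assume Y uses a memory-one strategy $\mathbf q$ of Nash type such that either (i) $\mathbf q$ is generous, or (ii) $q_3+q_4>0$. Then $\{cc\}$ is the unique terminal set of the associated Markov matrix $\mathbf M$; in particular $\mathbf M$ has a unique stationary distribution.
   Context: Iterated Prisoner's Dilemma: payoffs $T>R>P>S$ with $2R>T+S$; outcomes of a round are ordered $cc,cd,dc,dd$ (first letter X's play, second Y's; $c$ = cooperate, $d$ = defect); payoff vectors $\mathbf S_X=(R,S,T,P)$, $\mathbf S_Y=(R,T,S,P)$. A memory-one strategy for X is $\mathbf p=(p_1,p_2,p_3,p_4)\in[0,1]^4$, $p_i$ the probability X plays $c$ after the $i$-th outcome. A memory-one strategy for Y is $\mathbf q=(q_1,\dots,q_4)\in[0,1]^4$, with $q_1,q_2,q_3,q_4$ the probabilities Y plays $c$ after outcomes $cc,dc,cd,dd$ respectively. The associated Markov matrix on the states $cc,cd,dc,dd$ has rows $(p_iq'_i,\ p_i(1-q'_i),\ (1-p_i)q'_i,\ (1-p_i)(1-q'_i))$, $i=1,\dots,4$, where $(q'_1,q'_2,q'_3,q'_4)=(q_1,q_3,q_2,q_4)$. A terminal set is a minimal nonempty set of states that no path of positive-probability transitions leaves. A strategy is agreeable if its first entry is $1$, and generous if its second and fourth entries are positive. For a strategy pattern of Y (any rule, possibly history-dependent and random) a limit distribution is a limit point $\mathbf v$ of the Cesàro averages of the round-$n$ outcome distributions, with payoffs $s_X=\langle\mathbf v\cdot\mathbf S_X\rangle$,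 $s_Y=\langle\mathbf v\cdot\mathbf S_Y\rangle$. A strategy for X is of Nash type if it is agreeable and, for every strategy pattern of the opponent and every associated limit distribution, $s_Y\ge R$ implies $s_Y=R$; the same definition is applied to Y's strategy with the roles of X and Y exchanged. *)

(* Defs.v *)
From HB Require Import structures.
From mathcomp Require Import all_boot all_order all_algebra.
From mathcomp Require Import reals.
Set Implicit Arguments. Unset Strict Implicit. Unset Printing Implicit Defensive.
Import Order.TTheory GRing.Theory Num.Theory.
Local Open Scope ring_scope.

(* Outcomes of a round, ordered cc, cd, dc, dd (first letter = X's play).
   They are also used as the indices 1..4 of strategy vectors. *)
Definition o_cc : 'I_4 := @Ordinal 4 0 isT.
Definition o_cd : 'I_4 := @Ordinal 4 1 isT.
Definition o_dc : 'I_4 := @Ordinal 4 2 isT.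
Definition o_dd : 'I_4 := @Ordinal 4 3 isT.

Definition x_coop (o : 'I_4) : bool := (val o == 0%N) || (val o == 1%N).
Definition y_coop (o : 'I_4) : bool := (val o == 0%N) || (val o == 2%N).

Section Defs.
Variable R : realType.

Definition is_strategy (s : 'I_4 -> R) := forall i, 0 <= s i <= 1.
Definition agreeable (s : 'I_4 -> R) := s o_cc = 1.
Definition generous (s : 'I_4 -> R) := 0 < s o_cd /\ 0 < s o_dd.

Definition qprime (q : 'I_4 -> R) (i : 'I_4) : R :=
  if i == o_cd then q o_dc else if i == o_dc then q o_cd else q i.

Definition step (a b : R) (o : 'I_4) : R :=
  (if x_coop o then a else 1 - a) * (if y_coop o then b else 1 - b).

Definition markov (p q : 'I_4 -> R) : 'M[R]_4 :=
  \matrix_(i < 4, j < 4) step (p i) (qprime q i) j.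

Definition closed_set (M : 'M[R]_4) (A : {set 'I_4}) :=
  forall i j, i \in A -> 0 < M i j -> j \in A.

Definition terminal_set (M : 'M[R]_4) (A : {set 'I_4}) :=
  [/\ A != set0, closed_set M A &
      forall B : {set 'I_4}, B \subset A -> B != set0 -> closed_set M B -> B = A].

Definition stationary (M : 'M[R]_4) (w : 'I_4 -> R) :=
  [/\ forall i, 0 <= w i, \sum_i w i = 1 & forall j, \sum_i w i * M i j = w j].

(* Strategy patterns: a (behavioural, possibly random, history-dependent) rule
   gives the probability of cooperating as a function of the history of
   previous outcomes (oldest first). *)
Definition is_pattern (f : seq 'I_4 -> R) := forall h, 0 <= f h <= 1.

Fixpoint hprob_from (xs ys : seq 'I_4 -> R) (past fut : seq 'I_4) : R :=
  if fut is o :: f then step (xs past) (ys past) o * hprob_from xs ys (rcons past o) f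
  else 1.

Definition hprob xs ys (h : seq 'I_4) := hprob_from xs ys [::] h.

(* distribution of the outcome of round n.+1 *)
Definition vround xs ys (n : nat) (s : 'I_4) : R :=
  \sum_(t : (n.+1).-tuple 'I_4 | tnth t ord_max == s) hprob xs ys t.

Definition cesaro xs ys (N : nat) (s : 'I_4) : R :=
  (N.+1%:R)^-1 * \sum_(n < N.+1) vround xs ys n s.

Definition limit_distribution xs ys (v : 'I_4 -> R) :=
  forall eps : R, 0 < eps -> forall M : nat,
    exists N : nat, (M <= N)%N /\ forall s, `|cesaro xs ys N s - v s| < eps.

Definition mem1X (c0 : R) (p : 'I_4 -> R) (h : seq 'I_4) : R :=
  if h is o :: _ then p (last o h) else c0.
Definition mem1Y (c0 : R) (q : 'I_4 -> R) (h : seq 'I_4) : R :=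
  if h is o :: _ then qprime q (last o h) else c0.

Definition SX (T Rw P S : R) (o : 'I_4) : R :=
  if o == o_cc then Rw else if o == o_cd then S else if o == o_dc then T else P.
Definition SY (T Rw P S : R) (o : 'I_4) : R :=
  if o == o_cc then Rw else if o == o_cd then T else if o == o_dc then S else P.
Definition payoff (v S : 'I_4 -> R) : R := \sum_o v o * S o.

Definition nash_typeX (T Rw P S : R) (p : 'I_4 -> R) :=
  agreeable p /\
  forall (c0 : R) (ys : seq 'I_4 -> R) (v : 'I_4 -> R),
    0 <= c0 <= 1 -> is_pattern ys -> limit_distribution (mem1X c0 p) ys v ->
    Rw <= payoff v (SY T Rw P S) -> payoff v (SY T Rw P S) = Rw.

Definition nash_typeY (T Rw P S : R) (q : 'I_4 -> R) :=
  agreeable q /\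
  forall (c0 : R) (xs : seq 'I_4 -> R) (v : 'I_4 -> R),
    0 <= c0 <= 1 -> is_pattern xs -> limit_distribution xs (mem1Y c0 q) v ->
    Rw <= payoff v (SX T Rw P S) -> payoff v (SX T Rw P S) = Rw.

End Defs.

(* Main.v *)
Require Import Defs.
From HB Require Import structures.
From mathcomp Require Import all_boot all_order all_algebra.
From mathcomp Require Import reals.
From Stdlib Require Import FunctionalExtensionality.
From mathcomp Require Import lra.
Import Order.TTheory GRing.Theory Num.Theory.
Local Open Scope ring_scope.

Section Aux.
Variable R : realType.
Implicit Types (xs ys : seq 'I_4 -> R).

Lemma hprob_all xs ys o0 :
  (forall h, all (pred1 o0) h -> forall o, step (xs h) (ys h) o = (o == o0)%:R) ->
  forall fut past, all (pred1 o0) past ->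
  hprob_from xs ys past fut = (all (pred1 o0) fut)%:R.
Proof.
move=> H; elim=> [|o f IH] past Hp /=; first by [].
rewrite H //; case: (eqVneq o o0) => [->|ne].
  by rewrite ?eqxx ?mul1r IH // ?all_rcons /= ?eqxx.
by rewrite mul0r.
Qed.

Lemma vround_const xs ys o0 :
  (forall h, all (pred1 o0) h -> forall o, step (xs h) (ys h) o = (o == o0)%:R) ->
  forall n s, vround xs ys n s = (s == o0)%:R.
Proof.
move=> H n s; rewrite /vround.
under eq_bigr => t _ do rewrite /hprob (@hprob_all xs ys o0 H) //.
rewrite big_mkcond (bigD1 (nseq_tuple n.+1 o0)) //=.
rewrite tnth_nseq eqxx.
have -> : all (pred1 o0) (nseq n o0).
  by apply/all_pred1P; rewrite size_nseq.
rewrite big1 ?addr0; first by rewrite eq_sym; case: ifP.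
move=> t ne; case: ifP => // _.
case Ha: (all (pred1 o0) t) => //.
move/all_pred1P: Ha => Ha.
exfalso; move/negP: ne; apply; apply/eqP; apply: val_inj => /=.
by rewrite Ha size_tuple.
Qed.

Lemma limit_const xs ys o0 :
  (forall h, all (pred1 o0) h -> forall o, step (xs h) (ys h) o = (o == o0)%:R) ->
  limit_distribution xs ys (fun s => (s == o0)%:R).
Proof.
move=> H eps He M; exists M; split => // s.
have -> : cesaro xs ys M s = (s == o0)%:R.
  rewrite /cesaro.
  under eq_bigr => n _ do rewrite (@vround_const xs ys o0 H).
  rewrite sumr_const card_ord -(mulr_natl ((s == o0)%:R)) mulrA mulVf ?mul1r //.
  by rewrite pnatr_eq0.
by rewrite subrr normr0.
Qed.

Lemma payoff_delta (o0 : 'I_4) (f : 'I_4 -> R) :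
  payoff (fun s => (s == o0)%:R) f = f o0.
Proof.
rewrite /payoff (bigD1 o0) //= eqxx mul1r big1 ?addr0 //.
by move=> o /negbTE ->; rewrite mul0r.
Qed.

End Aux.
Section Aux2.
Variable R : realType.

Lemma ord4P (P : 'I_4 -> Prop) : P o_cc -> P o_cd -> P o_dc -> P o_dd -> forall o, P o.
Proof.
move=> H0 H1 H2 H3 [[|[|[|[|k]]]] Hk].
- by rewrite (_ : Ordinal Hk = o_cc) //; apply: val_inj.
- by rewrite (_ : Ordinal Hk = o_cd) //; apply: val_inj.
- by rewrite (_ : Ordinal Hk = o_dc) //; apply: val_inj.
- by rewrite (_ : Ordinal Hk = o_dd) //; apply: val_inj.
- by [].
Qed.

Lemma step_cc (a b : R) : step a b o_cc = a * b. Proof. by []. Qed.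
Lemma step_cd (a b : R) : step a b o_cd = a * (1 - b). Proof. by []. Qed.
Lemma step_dc (a b : R) : step a b o_dc = (1 - a) * b. Proof. by []. Qed.
Lemma step_dd (a b : R) : step a b o_dd = (1 - a) * (1 - b). Proof. by []. Qed.

Lemma qp_cc (q : 'I_4 -> R) : qprime q o_cc = q o_cc. Proof. by []. Qed.
Lemma qp_cd (q : 'I_4 -> R) : qprime q o_cd = q o_dc. Proof. by []. Qed.
Lemma qp_dc (q : 'I_4 -> R) : qprime q o_dc = q o_cd. Proof. by []. Qed.
Lemma qp_dd (q : 'I_4 -> R) : qprime q o_dd = q o_dd. Proof. by []. Qed.

Lemma step10 o : step (1:R) 0 o = (o == o_cd)%:R.
Proof. by move: o; apply: ord4P; rewrite /step /= ?subr0 ?subrr ?mulr1 ?mul1r ?mulr0 ?mul0r. Qed.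
Lemma step01 o : step (0:R) 1 o = (o == o_dc)%:R.
Proof. by move: o; apply: ord4P; rewrite /step /= ?subr0 ?subrr ?mulr1 ?mul1r ?mulr0 ?mul0r. Qed.
Lemma step11 o : step (1:R) 1 o = (o == o_cc)%:R.
Proof. by move: o; apply: ord4P; rewrite /step /= ?subr0 ?subrr ?mulr1 ?mul1r ?mulr0 ?mul0r. Qed.

Inductive reach (M : 'M[R]_4) : 'I_4 -> Prop :=
| reach0 : reach M o_cc
| reachS i k : 0 < M i k -> reach M k -> reach M i.

Lemma closed_reach M A i : closed_set M A -> i \in A -> reach M i -> o_cc \in A.
Proof.
move=> HA Hi r; elim: r Hi => [//|j k Mjk _ IH Hj].
by apply: IH; apply: HA Hj Mjk.
Qed.

Lemma stat_reach (M : 'M[R]_4) w : (forall i j, 0 <= M i j) ->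
  stationary M w -> M o_cc o_cc = 1 -> forall i, reach M i -> i != o_cc -> w i = 0.
Proof.
move=> Mnn [wnn _ wst] Mcc.
have L1 : forall i, i != o_cc -> 0 < M i o_cc -> w i = 0.
  move=> i ni Mi.
  have := wst o_cc; rewrite (bigD1 o_cc) //= Mcc mulr1 => /eqP.
  rewrite -subr_eq0 addrC addrK => /eqP /psumr_eq0P H.
  have /eqP := H (fun j _ => mulr_ge0 (wnn j) (Mnn j o_cc)) i ni.
  rewrite mulf_eq0 => /orP [/eqP //|/eqP e].
  by rewrite e ltxx in Mi.
have L2 : forall i k, w k = 0 -> 0 < M i k -> w i = 0.
  move=> i k wk Mi.
  have := wst k; rewrite wk => /psumr_eq0P H.
  have /eqP := H (fun j _ => mulr_ge0 (wnn j) (Mnn j k)) i isT.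
  rewrite mulf_eq0 => /orP [/eqP //|/eqP e].
  by rewrite e ltxx in Mi.
move=> i r; elim: r => [|j k Mjk rk IH nj]; first by rewrite eqxx.
case: (eqVneq k o_cc) => [ek|nk].
  by apply: L1 => //; rewrite -ek.
by apply: (L2 j k) => //; apply: IH.
Qed.

End Aux2.
Arguments reach {R}.
Arguments reach0 {R M}.
Arguments reachS {R M}.
Arguments closed_reach {R M A i}.
Arguments stat_reach {R M w}.
Arguments payoff_delta {R}.
Arguments limit_const {R xs ys o0}.


Theorem proposition2p7 (R : realType) (T Rw P S : R)
  (p q : 'I_4 -> R) :
  P < Rw -> Rw < T -> S < P -> T + S < 2 * Rw ->
  is_strategy p -> is_strategy q ->
  generous p -> nash_typeX T Rw P S p ->
  nash_typeY T Rw P S q -> (generous q \/ 0 < q o_dc + q o_dd) ->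
  (forall A : {set 'I_4}, terminal_set (markov p q) A <-> A = [set o_cc]) /\
  (exists w, stationary (markov p q) w /\
     forall w', stationary (markov p q) w' -> w' = w).
Proof.
move=> _ RT _ _ Hp Hq [p2 p4] NX NY Hor.
have pcc : p o_cc = 1 by case: NX.
have qcc : q o_cc = 1 by case: NY.
have pcd1 : p o_cd < 1.
  rewrite lt_neqAle (andP (Hp o_cd)).2 andbT; apply/negP => /eqP e.
  case: NX => _ /(_ 1 (fun _ => 0) (fun s => (s == o_cd)%:R)).
  rewrite payoff_delta /SY /=.
  move=> H; have := H _ _ _ (ltW RT).
  move=> H'; suff: T = Rw by move=> TE'; rewrite TE' ltxx in RT.
  apply: H'; [by rewrite ler01 lexx | by move=> h; rewrite lexx ler01 |].
  apply: limit_const => h Hh o.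
  case: h Hh => [|a h] Hh /=; first exact: step10.
  have -> : last a h = o_cd by apply/eqP; apply: (allP Hh); apply: mem_last.
  by rewrite e; apply: step10.
have qcd1 : q o_cd < 1.
  rewrite lt_neqAle (andP (Hq o_cd)).2 andbT; apply/negP => /eqP e.
  case: NY => _ /(_ 1 (fun _ => 0) (fun s => (s == o_dc)%:R)).
  rewrite payoff_delta /SX /=.
  move=> H; have := H _ _ _ (ltW RT).
  move=> H'; suff: T = Rw by move=> TE'; rewrite TE' ltxx in RT.
  apply: H'; [by rewrite ler01 lexx | by move=> h; rewrite lexx ler01 |].
  apply: limit_const => h Hh o.
  case: h Hh => [|a h] Hh /=; first exact: step01.
  have -> : last a h = o_dc by apply/eqP; apply: (allP Hh); apply: mem_last.
  by rewrite qp_dc e; apply: step01.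
set M := markov p q.
have ME : forall i j, M i j = step (p i) (qprime q i) j by move=> i j; rewrite mxE.
have qpr : forall i, 0 <= qprime q i <= 1 by apply: ord4P; rewrite ?qp_cc ?qp_cd ?qp_dc ?qp_dd.
have Mnn : forall i j, 0 <= M i j.
  move=> i j; rewrite ME /step; have /andP[a b] := Hp i; have /andP[c d] := qpr i.
  by apply: mulr_ge0; case: ifP => _; rewrite ?subr_ge0.
have Mcc : forall j, M o_cc j = (j == o_cc)%:R.
  by move=> j; rewrite ME qp_cc pcc qcc step11.
have B := fun i => andP (Hp i).
have Bq := fun i => andP (Hq i).
have [p30 p31] := B o_dc.
have [q20 q21] := Bq o_cd.
have [q30 q31] := Bq o_dc.
have [q40 q41] := Bq o_dd.
have Hor' : 0 < q o_dd \/ 0 < q o_dc.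
  case: Hor => [[_ h]|h]; first by left.
  case: (ltrP 0 (q o_dd)) => h4; [by left | right; lra].
have rdd_dd : 0 < q o_dd -> reach M o_dd.
  move=> h; apply: (@reachS _ M _ o_cc); last exact: reach0.
  by rewrite ME qp_dd step_cc; apply: mulr_gt0.
have rcd_dc : 0 < q o_dc -> reach M o_cd.
  move=> h; apply: (@reachS _ M _ o_cc); last exact: reach0.
  by rewrite ME qp_cd step_cc; apply: mulr_gt0.
have rdd : reach M o_dd.
  case: (ltrP 0 (q o_dd)) => h4; first exact: rdd_dd.
  have h3 : 0 < q o_dc by case: Hor' => h; [lra|].
  apply: (@reachS _ M _ o_cd); last exact: rcd_dc.
  rewrite ME qp_dd step_cd; apply: mulr_gt0 => //; lra.
have rcd : reach M o_cd.
  case: (ltrP 0 (q o_dc)) => h3; first exact: rcd_dc.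
  apply: (@reachS _ M _ o_dd) => //.
  rewrite ME qp_cd step_dd; apply: mulr_gt0; lra.
have rdc : reach M o_dc.
  case: (ltrP 0 (p o_dc)) => h.
    case: (ltrP 0 (q o_cd)) => h'.
      apply: (@reachS _ M _ o_cc); last exact: reach0.
      by rewrite ME qp_dc step_cc; apply: mulr_gt0.
    apply: (@reachS _ M _ o_cd) => //.
    rewrite ME qp_dc step_cd; apply: mulr_gt0 => //; lra.
  apply: (@reachS _ M _ o_dd) => //.
  rewrite ME qp_dc step_dd; apply: mulr_gt0; lra.
have rall : forall i, reach M i by apply: ord4P => //; exact: reach0.
have cl1 : closed_set M [set o_cc].
  move=> i j; rewrite inE => /eqP ->.
  by rewrite Mcc inE; case: (j == o_cc); rewrite // ltxx.
split.
  move=> A; split.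
    case=> nA cA minA.
    have [i iA] : exists i, i \in A by apply/set0Pn.
    have ccA := closed_reach cA iA (rall i).
    symmetry; apply: minA => //; first by rewrite sub1set.
    by apply/set0Pn; exists o_cc; rewrite inE.
  move=> ->; split => //; first by apply/set0Pn; exists o_cc; rewrite inE.
  move=> C; rewrite subset1 => /orP [/eqP //| /eqP ->]; by rewrite eqxx.
have Mcc1 : M o_cc o_cc = 1 by rewrite Mcc eqxx.
exists (fun i => (i == o_cc)%:R); split.
  split.
  - by move=> i; rewrite ler0n.
  - by rewrite (bigD1 o_cc) //= big1 ?addr0 // => i /negbTE ->.
  - move=> j; have := payoff_delta o_cc (fun i => M i j); rewrite /payoff => ->.
    by rewrite Mcc.
move=> w' Hw'; apply: functional_extensionality => i.
have Z := stat_reach Mnn Hw' Mcc1.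
case: (eqVneq i o_cc) => [->|ni]; last by rewrite Z. 
case: Hw' => _ Hs _; rewrite (bigD1 o_cc) //= big1 ?addr0 in Hs; first by rewrite Hs.
by move=> j nj; apply: Z.
Qed.
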